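(* Assume the standing setting and Assumptions (A1), (A2), (A3) described in the context. Then the Riccati difference equation $\Sigma_k=A_k\Sigma_{k+1}\Theta(\Sigma_{k+1})^{-1}A_k^\top+B_k\bar R_k^{-1}B_k^\top$, $k\in\mathcal{T}$, $\Sigma_N=0$, where $\Theta(\Sigma_{k+1})=I+\bar Q_k\Sigma_{k+1}$, admits a unique solution $\{\Sigma_k\}$ consisting of symmetric positive semidefinite matrices, and moreover $\Theta(\Sigma_{k+1})$ is invertible for every $k\in\mathcal{T}$.
   Context: Fix integers $N\ge 1$, $n,m\ge1$, $\mathcal{T}=\{0,\dots,N-1\}$. (A1): $A_k,C_k\in\mathbb{R}^{n\times n}$, $B_k\in\mathbb{R}^{n\times m}$ are deterministic matrices for $k\in\mathcal{T}$ (and a square-integrable process $q$ with $q_k$ $\mathcal{F}_{k-1}$-measurable is given). (A2): $G_0\in\mathbb{S}^n$, $Q_k\in\mathbb{S}^n$, $R_k\in\mathbb{S}^m$, $S_k\in\mathbb{R}^{m\times n}$ deterministic (and square-integrable processes $\eta,\rho$ with $\eta_k,\rho_k$ $\mathcal{F}_{k-1}$-measurable are given). (A3): $G_0\ge0$, $R_k$ uniformly positive definite, and $Q_k-S_k^\top R_k^{-1}S_k\ge0$ for all $k\in\mathcal{T}$. Here $\mathbb{S}^d$ denotes real symmetric $d\times d$ matrices. Define matrices $H_0,\dots,H_N$ by the forward recursion $H_0=G_0$, $H_{k+1}=A_k^\top H_kA_k+(A_k^\top H_kB_k)R_k^{-1}(B_k^\top H_kA_k)$, $k\in\mathcal{T}$.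 Set $\bar Q_k=Q_k-S_k^\top R_k^{-1}S_k$ and $\bar R_k=R_k+B_k^\top H_kB_k$. *)

(* Defs.v *)
From HB Require Import structures.
From mathcomp Require Import all_boot all_order all_algebra.
Set Implicit Arguments. Unset Strict Implicit. Unset Printing Implicit Defensive.
Import Order.TTheory GRing.Theory Num.Theory.
Local Open Scope ring_scope.

Definition psd (R : realFieldType) (n : nat) (M : 'M[R]_n) : Prop :=
  M^T = M /\ forall x : 'cV[R]_n, 0 <= (x^T *m M *m x) 0 0.

Definition pd (R : realFieldType) (n : nat) (M : 'M[R]_n) : Prop :=
  forall x : 'cV[R]_n, x != 0 -> 0 < (x^T *m M *m x) 0 0.

Fixpoint Hseq (R : realFieldType) (n m : nat) (G0 : 'M[R]_n)
  (A : nat -> 'M[R]_n) (B : nat -> 'M[R]_(n, m)) (Rm : nat -> 'M[R]_m)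
  (k : nat) : 'M[R]_n :=
  match k with
  | 0 => G0
  | k'.+1 =>
      let H := Hseq G0 A B Rm k' in
      (A k')^T *m H *m A k'
        + ((A k')^T *m H *m B k') *m invmx (Rm k') *m ((B k')^T *m H *m A k')
  end.

(* Main.v *)
Require Import Defs.
From HB Require Import structures.
From mathcomp Require Import all_boot all_order all_algebra.
From mathcomp Require Import ring lra.
Import Order.TTheory GRing.Theory Num.Theory.
Local Open Scope ring_scope.

Lemma trD (R : realFieldType) n (A B : 'M[R]_n) : (A + B)^T = A^T + B^T.
Proof. exact: linearD. Qed.


Lemma q_tr (R : realFieldType) n p (x : 'cV[R]_n) (M : 'M[R]_(n,p)) (y : 'cV[R]_p) :
  (x^T *m M *m y) 0 0 = (y^T *m M^T *m x) 0 0.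
Proof.
have -> : y^T *m M^T *m x = (x^T *m M *m y)^T by rewrite !trmx_mul trmxK mulmxA.
by rewrite [RHS]mxE.
Qed.

Lemma psd_congr (R : realFieldType) n p (M : 'M[R]_p) (P : 'M[R]_(n,p)) :
  psd M -> psd (P *m M *m P^T).
Proof.
case=> sM qM; split; first by rewrite !trmx_mul trmxK sM mulmxA.
move=> x; have := qM (P^T *m x); by rewrite trmx_mul trmxK !mulmxA.
Qed.

Lemma psdD (R : realFieldType) n (A B : 'M[R]_n) : psd A -> psd B -> psd (A + B).
Proof.
case=> sA qA [sB qB]; split; first by rewrite trD sA sB.
by move=> x; rewrite mulmxDr mulmxDl mxE addr_ge0.
Qed.

Lemma ker_exists (R : realFieldType) n (M : 'M[R]_n) :
  M \notin unitmx -> exists2 x : 'cV[R]_n, x != 0 & M *m x = 0.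
Proof.
rewrite -unitmx_tr -row_free_unit -kermx_eq0 => /rowV0Pn [v].
move=> /sub_kermxP vM v0.
exists v^T; first by apply: contra v0 => /eqP h; apply/eqP; apply: trmx_inj; rewrite h trmx0.
by apply: trmx_inj; rewrite trmx_mul trmxK vM !trmx0.
Qed.

Lemma pd_unit (R : realFieldType) n (M : 'M[R]_n) : pd M -> M \in unitmx.
Proof.
move=> pM; apply/negPn/negP => /ker_exists [x x0 Mx].
by have := pM x x0; rewrite -mulmxA Mx mulmx0 mxE ltxx.
Qed.

Lemma psd_inv (R : realFieldType) n (M : 'M[R]_n) :
  M^T = M -> M \in unitmx -> (forall x : 'cV[R]_n, 0 <= (x^T *m M *m x) 0 0) -> psd (invmx M).
Proof.
move=> sM uM qM; have sI : (invmx M)^T = invmx M by rewrite trmx_inv sM.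
split=> // x; have := qM (invmx M *m x).
by rewrite trmx_mul sI !mulmxA mulmxKV.
Qed.

Lemma psd_ker (R : realFieldType) n (M : 'M[R]_n) (x : 'cV[R]_n) :
  psd M -> (x^T *m M *m x) 0 0 = 0 -> M *m x = 0.
Proof.
case=> sM qM qx.
set y := M *m x.
set s : R := (y^T *m M *m x) 0 0.
set b : R := (y^T *m M *m y) 0 0.
have b0 : 0 <= b by apply: qM.
have hs : s = (y^T *m y) 0 0 by rewrite /s -mulmxA.
have s0 : 0 <= s by rewrite hs mxE sumr_ge0 // => i _; rewrite mxE -expr2 sqr_ge0.
have key : forall t, 0 <= 2 * t * s + t ^+ 2 * b.
  move=> t; have := qM (x + t *: y).
  have -> : (x + t *: y)^T = x^T + t *: y^T by rewrite linearD linearZ.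
  rewrite !mulmxDl !mulmxDr -!scalemxAl -!scalemxAr !scalerA.
  have E1 : forall (A B : 'M[R]_1), (A + B) 0 0 = A 0 0 + B 0 0 by move=> A B; rewrite mxE.
  have E2 : forall c (A : 'M[R]_1), (c *: A) 0 0 = c * A 0 0 by move=> c A; rewrite mxE.
  rewrite !E1 !E2 qx.
  rewrite (@q_tr R n n x M y) sM -/s -/b => h.
  suff -> : 2*t*s + t^+2*b = 0 + t*s + (t*s + t*t*b) by [].
  ring.
have : s = 0.
  have := key (- s / (b + 1)).
  have b1 : 0 < b + 1 by rewrite ltr_wpDl.
  move=> h; apply/eqP; rewrite -sqrf_eq0 eq_le sqr_ge0 andbT.
  have : 0 <= s ^+ 2 * (- b - 2) / (b + 1) ^+ 2.
    suff -> : s ^+ 2 * (- b - 2) / (b + 1) ^+ 2 = 2 * (- s / (b + 1)) * s + (- s / (b + 1)) ^+ 2 * b by [].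
    by field; rewrite lt0r_neq0.
  rewrite pmulr_lge0 ?invr_gt0 ?exprn_gt0 // => h2.
  nra.
move=> {}s0; apply/matrixP => i j; rewrite [j]ord1 [RHS]mxE.
have : (y^T *m y) 0 0 == 0 by rewrite -hs s0.
rewrite mxE psumr_eq0; last by move=> k _; rewrite mxE -expr2 sqr_ge0.
move=> /allP /(_ i (mem_index_enum _)) /=; rewrite !mxE -expr2 sqrf_eq0 => /eqP.
done.
Qed.

Lemma theta_unit (R : realFieldType) n (X Qb : 'M[R]_n) :
  psd X -> psd Qb -> (1%:M + Qb *m X) \in unitmx.
Proof.
move=> pX pQ; apply/negPn/negP => /ker_exists [x x0].
rewrite mulmxDl mul1mx => /eqP; rewrite addr_eq0 => /eqP hx.
set u := X *m x.
have h1 : 0 <= (x^T *m X *m x) 0 0 by apply: pX.2.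
have h2 : 0 <= (u^T *m Qb *m u) 0 0 by apply: pQ.2.
have e : (x^T *m X *m x) 0 0 = - (u^T *m Qb *m u) 0 0.
  rewrite -mulmxA -/u {1}hx -mulmxA -/u linearN /= trmx_mul pQ.1 mulNmx.
  by rewrite mxE.
have : (u^T *m Qb *m u) 0 0 = 0 by apply/eqP; rewrite eq_le h2 andbT -oppr_ge0 -e.
move=> /(@psd_ker _ _ _ _ pQ) Qu.
by move: x0; rewrite hx -mulmxA -/u Qu oppr0 eqxx.
Qed.

Lemma psd_P (R : realFieldType) n (X Qb : 'M[R]_n) :
  psd X -> psd Qb -> psd (X *m invmx (1%:M + Qb *m X)).
Proof.
move=> pX pQ; have uT := @theta_unit _ _ _ _ pX pQ.
set T := 1%:M + Qb *m X.
have TT : T^T = 1%:M + X *m Qb by rewrite /T trD trmx1 trmx_mul pX.1 pQ.1.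
have XT : X *m T = T^T *m X by rewrite TT /T mulmxDr mulmxDl mulmx1 mul1mx mulmxA.
have uTT : T^T \in unitmx by rewrite unitmx_tr.
split.
  rewrite trmx_mul trmx_inv pX.1.
  apply: (canLR (mulKmx uTT)).
  by rewrite !mulmxA -XT mulmxK.
move=> x.
set y := invmx T *m x.
have hx : x = T *m y by rewrite /y mulKVmx.
have -> : x^T *m (X *m invmx T) *m x = y^T *m (T^T *m X) *m y.
  by rewrite {1}hx trmx_mul /y !mulmxA.
rewrite TT mulmxDl mul1mx mulmxDr mulmxDl mxE.
apply: addr_ge0; first by apply: pX.2.
have := pQ.2 (X *m y); rewrite trmx_mul pX.1 !mulmxA.
by rewrite mxE.
Qed.

Lemma pd_add (R : realFieldType) n (A B : 'M[R]_n) : pd A -> psd B -> pd (A + B).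
Proof.
move=> pA pB x x0; rewrite mulmxDr mulmxDl mxE.
by apply: ltr_wpDr; [apply: pB.2 | apply: pA].
Qed.


Lemma pd_q (R : realFieldType) n (M : 'M[R]_n) :
  pd M -> forall x : 'cV[R]_n, 0 <= (x^T *m M *m x) 0 0.
Proof.
move=> pM x; have [->|x0] := eqVneq x 0.
  by rewrite mulmx0 mxE.
exact/ltW/pM.
Qed.

Lemma psd0 (R : realFieldType) n : psd (0 : 'M[R]_n).
Proof. by split; [rewrite trmx0 | move=> x; rewrite mulmx0 mul0mx mxE]. Qed.

Fixpoint brec (T : Type) (N : nat) (z : T) (F : nat -> T -> T) (j : nat) : T :=
  match j with 0 => z | j'.+1 => F (N - j'.+1)%N (brec T N z F j') end.
Arguments brec {T}.

Lemma brecN (T : Type) N z F : brec (T:=T) N z F (N - N) = z.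
Proof. by rewrite subnn. Qed.

Lemma brecS (T : Type) N z F k : (k < N)%N ->
  brec (T:=T) N z F (N - k) = F k (brec N z F (N - k.+1)).
Proof.
move=> kN; rewrite -(subnSK kN) /= subnSK // subKn //; exact: ltnW.
Qed.

Theorem theorem4p3 (R : realFieldType) (N n m : nat)
  (A C : nat -> 'M[R]_n) (B : nat -> 'M[R]_(n, m)) (G0 : 'M[R]_n)
  (Q : nat -> 'M[R]_n) (Rm : nat -> 'M[R]_m) (S : nat -> 'M[R]_(m, n)) :
  (0 < N)%N -> (0 < n)%N -> (0 < m)%N ->
  G0^T = G0 ->
  (forall k, (k < N)%N -> (Q k)^T = Q k) ->
  (forall k, (k < N)%N -> (Rm k)^T = Rm k) ->
  psd G0 ->
  (forall k, (k < N)%N -> pd (Rm k)) ->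
  (forall k, (k < N)%N -> psd (Q k - (S k)^T *m invmx (Rm k) *m S k)) ->
  let H := Hseq G0 A B Rm in
  let Qbar := fun k => Q k - (S k)^T *m invmx (Rm k) *m S k in
  let Rbar := fun k => Rm k + (B k)^T *m H k *m B k in
  let Theta := fun k (X : 'M[R]_n) => 1%:M + Qbar k *m X in
  let riccati := fun Sig : nat -> 'M[R]_n =>
    Sig N = 0 /\
    forall k, (k < N)%N ->
      Sig k = A k *m Sig k.+1 *m invmx (Theta k (Sig k.+1)) *m (A k)^T
              + B k *m invmx (Rbar k) *m (B k)^T in
  exists Sig : nat -> 'M[R]_n,
    [/\ riccati Sig,
        (forall k, (k <= N)%N -> psd (Sig k)),
        (forall k, (k < N)%N -> Theta k (Sig k.+1) \in unitmx)
      & forall Sig' : nat -> 'M[R]_n, riccati Sig' ->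
          forall k, (k <= N)%N -> Sig' k = Sig k].
Proof.
move=> N0 n0 m0 sG sQ sR pG pR pQ H Qbar Rbar Theta riccati.
have hH : forall k, (k <= N)%N -> psd (H k).
  elim=> [|k IH] kN; first exact: pG.
  have kN' : (k < N)%N by [].
  have pHk := IH (ltnW kN').
  rewrite /H /= -/H.
  have e : (B k)^T *m H k *m A k = ((A k)^T *m H k *m B k)^T.
    by rewrite !trmx_mul trmxK pHk.1 mulmxA.
  have e2 : A k = ((A k)^T)^T by rewrite trmxK.
  rewrite e; apply: psdD; first by rewrite {2}e2; apply: psd_congr.
  apply: psd_congr; apply: psd_inv; first exact: sR.
    exact/pd_unit/pR.
  exact/pd_q/pR.
have hRb : forall k, (k < N)%N -> pd (Rbar k).
  move=> k kN; apply: pd_add; first exact: pR.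
  have -> : B k = ((B k)^T)^T by rewrite trmxK.
  rewrite trmxK; apply: psd_congr; exact/hH/ltnW.
have hRbi : forall k, (k < N)%N -> psd (invmx (Rbar k)).
  move=> k kN; apply: psd_inv; last exact/pd_q/hRb.
    rewrite /Rbar trD sR // !trmx_mul trmxK (hH k (ltnW kN)).1 mulmxA //.
  exact/pd_unit/hRb.
pose F := fun k X => A k *m X *m invmx (Theta k X) *m (A k)^T
              + B k *m invmx (Rbar k) *m (B k)^T.
have hF : forall k X, (k < N)%N -> psd X -> psd (F k X).
  move=> k X kN pX; apply: psdD; last exact/psd_congr/hRbi.
  rewrite -(mulmxA (A k) X); apply: psd_congr; exact: (@psd_P _ _ _ _ pX (pQ k kN)).
pose Sig := fun k => brec N 0 F (N - k).
have hSig : forall k, (k <= N)%N -> psd (Sig k).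
  move=> k kN; rewrite /Sig.
  have : (N - k <= N)%N by rewrite leq_subr.
  elim: (N - k)%N => [|j IH] jN; first exact: psd0.
  rewrite /=; apply: hF; last exact/IH/ltnW.
  by rewrite ltn_subrL N0.
have ric : riccati Sig.
  split; first exact: brecN.
  by move=> k kN; rewrite /Sig brecS.
exists Sig; split => //.
  by move=> k kN; apply: theta_unit; [exact: hSig | exact: pQ].
move=> Sig' [S'N S'k] k kN.
rewrite -(subKn kN).
have : (N - k <= N)%N by rewrite leq_subr.
elim: (N - k)%N => [|j IH] jN.
  by rewrite subn0 S'N ric.1.
have kN' : (N - j.+1 < N)%N by rewrite ltn_subrL N0.
rewrite (S'k _ kN') (ric.2 _ kN') (subnSK jN) IH //; exact: ltnW.
Qed.
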